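(* None of the following pairs of consecutive patterns is reciprocal: $(\underline{2010},\underline{2120})$, $(\underline{1000},\underline{1110})$, $(\underline{2100},\underline{2210})$. Here two consecutive patterns $p,q$ are reciprocal if for every $n\ge1$ and all $S,T\subseteq[n]$, $$|\{\epsilon\in I_n:\operatorname{Em}(p,\epsilon)=S,\ \operatorname{Em}(q,\epsilon)=T\}|=|\{\epsilon\in I_n:\operatorname{Em}(p,\epsilon)=T,\ \operatorname{Em}(q,\epsilon)=S\}|.$$
   Context: An inversion sequence of length $n$ is an integer sequence $\epsilon=\epsilon_1\cdots\epsilon_n$ with $0\le\epsilon_i<i$ for all $i$; $I_n$ denotes the set of them. The reduction of an integer word is obtained by replacing every occurrence of its $k$-th smallest distinct value by $k-1$. A consecutive pattern $p=\underline{p_1\cdots p_r}$ occurs in a sequence $\epsilon$ at position $i$ if the reduction of $\epsilon_i\cdots\epsilon_{i+r-1}$ equals $p_1\cdots p_r$. $\operatorname{Em}(p,\epsilon)$ is the set of positions at which $p$ occurs in $\epsilon$. *)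

(* Defs.v *)
From mathcomp Require Import all_boot.
Set Implicit Arguments. Unset Strict Implicit. Unset Printing Implicit Defensive.

Definition reduction (w : seq nat) : seq nat :=
  map (fun x => index x (sort leq (undup w))) w.

(* An element e : n.-tuple 'I_n is read with
   0-based indices: the entry at index i (position i+1) must be < i+1.
   (Values are automatically < n since e_i < i <= n.) *)
Definition is_invseq (n : nat) (e : n.-tuple 'I_n) : bool :=
  [forall i : 'I_n, (tnth e i : nat) <= i].

Definition Iseq (n : nat) : {set n.-tuple 'I_n} := [set e | is_invseq e].

(* Em p e: the set of positions at which the consecutive pattern p occurs.
   Position i+1 in [n] is encoded by the index i : 'I_n. *)
Definition Em (p : seq nat) (n : nat) (e : n.-tuple 'I_n) : {set 'I_n} :=
  [set i : 'I_n | (i + size p <= n)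
     && (reduction (take (size p) (drop i (map (@nat_of_ord n) e))) == p)].

Definition reciprocal (p q : seq nat) : Prop :=
  forall n : nat, 1 <= n -> forall S T : {set 'I_n},
    #|[set e in Iseq n | (Em p e == S) && (Em q e == T)]| =
    #|[set e in Iseq n | (Em p e == T) && (Em q e == S)]|.

(* Main.v *)
Require Import Defs.
From mathcomp Require Import all_boot.
From mathcomp Require Import zify.
Set Implicit Arguments. Unset Strict Implicit. Unset Printing Implicit Defensive.

Fixpoint invs (k : nat) : seq (seq nat) :=
  match k with
  | 0 => [:: [::]]
  | k'.+1 => [seq rcons t j | t <- invs k', j <- iota 0 k'.+1]
  end.

Definition is_inv (k : nat) (s : seq nat) : bool :=
  (size s == k) && all (fun i => nth 0 s i <= i) (iota 0 k).

Lemma invsE k s : (s \in invs k) = is_inv k s.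
Proof.
elim: k s => [|k IH] s.
  by case: s.
apply/allpairsP/idP.
  case=> [[t j]] [Ht Hj ->].
  have {Hj} Hj : j < k.+1 by move: Hj; rewrite mem_iota.
  rewrite IH in Ht; case/andP: Ht => /eqP Hs /allP Ha.
  rewrite /is_inv size_rcons Hs eqxx andTb; apply/allP => i; rewrite mem_iota => Hi.
  rewrite nth_rcons Hs.
  case: ltnP => Hik; first by apply: Ha; rewrite mem_iota.
  case: eqP => [->|]; first by simpl; lia.
  by [].
case/lastP: s => [|t j]; first by case/andP.
case/andP; rewrite size_rcons eqSS => /eqP Hs /allP Ha.
exists (t, j); split => //.
  change (t \in invs k); rewrite IH /is_inv Hs eqxx andTb; apply/allP => i; rewrite mem_iota => Hi.
  have := Ha i; rewrite mem_iota nth_rcons Hs.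
  have -> : i < k by lia.
  by apply; lia.
have := Ha k; rewrite mem_iota nth_rcons Hs ltnn eqxx mem_iota.
move=> H; have := H ltac:(lia); simpl; lia.
Qed.

Lemma invs_uniq k : uniq (invs k).
Proof.
elim: k => [|k IH] //.
change (uniq [seq rcons t j | t <- invs k, j <- iota 0 k.+1]).
apply: allpairs_uniq => //; first exact: iota_uniq.
by move=> [t1 j1] [t2 j2] _ _ /= /rcons_inj [-> ->].
Qed.

Definition fT (n : nat) (s : seq nat) : n.+1.-tuple 'I_n.+1 :=
  [tuple (inord (nth 0 s i) : 'I_n.+1) | i < n.+1].

Lemma card_inv m (Q : pred (seq nat)) :
  #|[set e in Iseq m.+1 | Q (map (@nat_of_ord m.+1) e)]| = count Q (invs m.+1).
Proof.
rewrite cardE -(size_map (fun e : m.+1.-tuple 'I_m.+1 => map (@nat_of_ord _) e)) -size_filter.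
apply/perm_size/uniq_perm.
- rewrite map_inj_uniq ?enum_uniq //.
  move=> e1 e2 /= H; apply: val_inj; apply: (inj_map val_inj) H.
- by rewrite filter_uniq // invs_uniq.
move=> x; rewrite mem_filter invsE; apply/mapP/andP.
  case=> e; rewrite mem_enum !inE => /andP[He HQ] ->; split => //.
  rewrite /is_inv size_map size_tuple eqxx andTb; apply/allP => i; rewrite mem_iota => Hi.
  rewrite (nth_map ord0) ?size_tuple; last by lia.
  have Hi' : i < m.+1 by lia.
  have := forallP He (Ordinal Hi'); by rewrite (tnth_nth ord0).
case=> HQ /andP[/eqP Hx /allP Ha].
have Hm : map (@nat_of_ord _) (fT m x) = x.
  apply: (@eq_from_nth _ 0); first by rewrite size_map size_tuple Hx.
  move=> i; rewrite size_map size_tuple => Hi.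
  rewrite (nth_map ord0) ?size_tuple //.
  have -> : nth ord0 (fT m x) i = tnth (fT m x) (Ordinal Hi) by rewrite (tnth_nth ord0).
  rewrite tnth_mktuple inordK //=.
  have := Ha i; rewrite mem_iota => H; have := H ltac:(lia); lia.
exists (fT m x) => //.
rewrite mem_enum !inE Hm HQ andbT.
apply/forallP => i; rewrite tnth_mktuple inordK.
  by have := Ha i; rewrite mem_iota => H; apply: H; have := ltn_ord i; lia.
by have := Ha i; rewrite mem_iota => H; have := H ltac:(have := ltn_ord i; lia); have := ltn_ord i; lia.
Qed.

Definition emL (n : nat) (p : seq nat) (SL : seq nat) (s : seq nat) : bool :=
  all (fun i => ((i + size p <= n) && (reduction (take (size p) (drop i s)) == p))
                 == (i \in SL)) (iota 0 n).

Lemma EmE n p SL (e : n.-tuple 'I_n) :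
  (Em p e == [set i : 'I_n | nat_of_ord i \in SL]) = emL n p SL (map (@nat_of_ord n) e).
Proof.
apply/eqP/allP.
  move=> H i; rewrite mem_iota /= => Hi.
  have Hi' : i < n by lia.
  have := f_equal (fun A : {set 'I_n} => Ordinal Hi' \in A) H.
  by rewrite !inE /= => ->.
move=> H; apply/setP => i; rewrite !inE.
have := H i; rewrite mem_iota /=; move=> H'; apply/eqP; apply: H'.
by have := ltn_ord i; lia.
Qed.

Lemma card_em m p q SL TL :
  #|[set e in Iseq m.+1 | (Em p e == [set i : 'I_m.+1 | nat_of_ord i \in SL])
                       && (Em q e == [set i : 'I_m.+1 | nat_of_ord i \in TL])]|
  = count (fun s => emL m.+1 p SL s && emL m.+1 q TL s) (invs m.+1).
Proof.
rewrite -card_inv; apply: eq_card => e; rewrite !inE.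
by rewrite !EmE.
Qed.

Lemma not_rec p q n SL TL :
  count (fun s => emL n.+1 p SL s && emL n.+1 q TL s) (invs n.+1) !=
  count (fun s => emL n.+1 p TL s && emL n.+1 q SL s) (invs n.+1) ->
  ~ reciprocal p q.
Proof.
move=> Hne H; move: (H n.+1 isT [set i : 'I_n.+1 | nat_of_ord i \in SL]
                                 [set i : 'I_n.+1 | nat_of_ord i \in TL]).
by rewrite !card_em; apply/eqP.
Qed.

Theorem mainTheorem3 :
  ~ reciprocal [:: 2; 0; 1; 0] [:: 2; 1; 2; 0] /\
  ~ reciprocal [:: 1; 0; 0; 0] [:: 1; 1; 1; 0] /\
  ~ reciprocal [:: 2; 1; 0; 0] [:: 2; 2; 1; 0].
Proof.
split; [|split].
- apply: (@not_rec _ _ 7 [:: 4] [::]); vm_compute; reflexivity.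
- apply: (@not_rec _ _ 6 [:: 3] [::]); vm_compute; reflexivity.
- apply: (@not_rec _ _ 6 [:: 3] [::]); vm_compute; reflexivity.
Qed.
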